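(* Let $n\ge0$ and let $\mathfrak g$ be a Leibniz algebra whose Frattini subalgebra $\Phi(\mathfrak g)$ is trivial. Then, up to isomorphism, there is only one $n$-Lie-stem Leibniz algebra that is $n$-Lie-isoclinic to $\mathfrak g$, namely $\mathfrak g/\mathcal Z_n^{\mathsf{Lie}}(\mathfrak g)$.
   Context: All Leibniz algebras are over a field $\mathbb{K}$ with $\frac12\in\mathbb{K}$. A Leibniz algebra is a vector space $\mathfrak g$ with a bilinear bracket $[-,-]$ satisfying $[x,[y,z]]=[[x,y],z]-[[x,z],y]$. For $x,y\in\mathfrak g$ put $[x,y]_{lie}=[x,y]+[y,x]$. For two-sided ideals $\mathfrak m,\mathfrak n$ of $\mathfrak g$, $[\mathfrak m,\mathfrak n]_{\mathsf{Lie}}$ denotes the two-sided ideal of $\mathfrak g$ generated by $\{[m,x]_{lie}: m\in\mathfrak m, x\in\mathfrak n\}$. Lower Lie-central series: $\gamma_1^{\mathsf{Lie}}(\mathfrak g)=\mathfrak g$, $\gamma_i^{\mathsf{Lie}}(\mathfrak g)=[\gamma_{i-1}^{\mathsf{Lie}}(\mathfrak g),\mathfrak g]_{\mathsf{Lie}}$ for $i\ge2$. Upper Lie-central series: $\mathcal Z_0^{\mathsf{Lie}}(\mathfrak g)=0$, $\mathcal Z_i^{\mathsf{Lie}}(\mathfrak g)=\{x\in\mathfrak g:[x,y]_{lie}\in\mathcal Z_{i-1}^{\mathsf{Lie}}(\mathfrak g)\ \text{for all } y\in\mathfrak g\}$ for $i\ge1$. A Leibniz algebra $\mathfrak g$ is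 an $n$-Lie-stem Leibniz algebra if $\mathcal Z_n^{\mathsf{Lie}}(\mathfrak g)\subseteq\gamma_{n+1}^{\mathsf{Lie}}(\mathfrak g)$. The Frattini subalgebra $\Phi(\mathfrak g)$ is the intersection of all maximal subalgebras of $\mathfrak g$. For $n\ge0$, Leibniz algebras $\mathfrak g_1,\mathfrak g_2$ are $n$-Lie-isoclinic, written $\mathfrak g_1\sim_n\mathfrak g_2$, if there exist Leibniz algebra isomorphisms $\eta:\mathfrak g_1/\mathcal Z_n^{\mathsf{Lie}}(\mathfrak g_1)\to\mathfrak g_2/\mathcal Z_n^{\mathsf{Lie}}(\mathfrak g_2)$ and $\xi:\gamma_{n+1}^{\mathsf{Lie}}(\mathfrak g_1)\to\gamma_{n+1}^{\mathsf{Lie}}(\mathfrak g_2)$ such that $\xi([\cdots[[x_1,x_2]_{lie},x_3]_{lie},\ldots,x_{n+1}]_{lie})=[\cdots[[y_1,y_2]_{lie},y_3]_{lie},\ldots,y_{n+1}]_{lie}$ whenever $x_i\in\mathfrak g_1$, $y_i\in\mathfrak g_2$ satisfy $\eta(x_i+\mathcal Z_n^{\mathsf{Lie}}(\mathfrak g_1))=y_i+\mathcal Z_n^{\mathsf{Lie}}(\mathfrak g_2)$ for $i=1,\ldots,n+1$. *)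

(* Defs.v *)
From HB Require Import structures.
From mathcomp Require Import all_boot all_order all_algebra.
Set Implicit Arguments. Unset Strict Implicit. Unset Printing Implicit Defensive.
Import GRing.Theory.
Local Open Scope ring_scope.

Record leibniz (K : fieldType) := Leibniz {
  lcarrier :> lmodType K;
  lbr : lcarrier -> lcarrier -> lcarrier;
  lbr_linl : forall (a : K) (x y z : lcarrier),
      lbr (a *: x + y) z = a *: lbr x z + lbr y z;
  lbr_linr : forall (a : K) (x y z : lcarrier),
      lbr z (a *: x + y) = a *: lbr z x + lbr z y;
  lbr_leibniz : forall x y z : lcarrier,
      lbr x (lbr y z) = lbr (lbr x y) z - lbr (lbr x z) y
}.

Section Defs.
Variable K : fieldType.

Definition lie (g : leibniz K) (x y : g) : g := lbr x y + lbr y x.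

Definition subspace (g : leibniz K) (S : g -> Prop) :=
  S 0 /\ forall (a : K) (x y : g), S x -> S y -> S (a *: x + y).

Definition subalgebra (g : leibniz K) (S : g -> Prop) :=
  subspace S /\ forall x y : g, S x -> S y -> S (lbr x y).

Definition ideal (g : leibniz K) (S : g -> Prop) :=
  subspace S /\ forall x y : g, S x -> S (lbr x y) /\ S (lbr y x).

Definition gen_ideal (g : leibniz K) (T : g -> Prop) : g -> Prop :=
  fun x => forall I : g -> Prop, ideal I -> (forall t, T t -> I t) -> I x.

Definition lie_comm (g : leibniz K) (M N : g -> Prop) : g -> Prop :=
  gen_ideal (fun z => exists m x, M m /\ N x /\ z = lie m x).

Unset Implicit Arguments.
(* gammaLie i = gamma_i^Lie(g) for i >= 1 (gammaLie 0 = gammaLie 1 = g) *)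
Fixpoint gammaLie (g : leibniz K) (i : nat) {struct i} : g -> Prop :=
  match i with
  | 0 => fun _ => True
  | 1 => fun _ => True
  | S j => @lie_comm g (gammaLie g j) (fun _ => True)
  end.

Fixpoint ZLie (g : leibniz K) (i : nat) {struct i} : g -> Prop :=
  match i with
  | 0 => fun x => x = 0
  | S j => fun x => forall y : g, ZLie g j (lie x y)
  end.

Set Implicit Arguments.
Definition Lie_stem (n : nat) (g : leibniz K) :=
  forall x : g, ZLie g n x -> gammaLie g n.+1 x.

Definition maximal_subalgebra (g : leibniz K) (M : g -> Prop) :=
  subalgebra M /\ (exists x, ~ M x) /\
  forall N : g -> Prop, subalgebra N -> (forall x, M x -> N x) ->
     (forall x, N x <-> M x) \/ (forall x, N x).

Definition Frattini (g : leibniz K) : g -> Prop :=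
  fun x => forall M : g -> Prop, maximal_subalgebra M -> M x.

Definition leib_hom (g h : leibniz K) (f : g -> h) :=
  (forall (a : K) (x y : g), f (a *: x + y) = a *: f x + f y) /\
  (forall x y : g, f (lbr x y) = lbr (f x) (f y)).

Definition leib_iso (g h : leibniz K) (f : g -> h) :=
  leib_hom f /\ bijective f.

Definition leib_isomorphic (g h : leibniz K) := exists f : g -> h, leib_iso f.

(* q together with pi is (a model of) the quotient g / I:
   pi is a surjective homomorphism with kernel I *)
Definition quotient_map (g : leibniz K) (I : g -> Prop) (q : leibniz K)
  (pi : g -> q) :=
  leib_hom pi /\ (forall y : q, exists x, pi x = y) /\
  (forall x, pi x = 0 <-> I x).

Unset Implicit Arguments.
Fixpoint lieNest (g : leibniz K) (x : nat -> g) (k : nat) : g :=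
  match k with
  | 0 => x 0%N
  | S j => lie (lieNest g x j) (x k)
  end.
Set Implicit Arguments.
Arguments lieNest {g} x k.

(* xi is an isomorphism of Leibniz algebras from the ideal A of g onto the
   ideal B of h (only its values on A matter) *)
Definition iso_on (g h : leibniz K) (A : g -> Prop) (B : h -> Prop)
  (xi : g -> h) :=
  (forall (a : K) (x y : g), A x -> A y -> xi (a *: x + y) = a *: xi x + xi y) /\
  (forall x y : g, A x -> A y -> xi (lbr x y) = lbr (xi x) (xi y)) /\
  (forall x, A x -> B (xi x)) /\
  (forall x y, A x -> A y -> xi x = xi y -> x = y) /\
  (forall z, B z -> exists x, A x /\ xi x = z).

Definition Lie_isoclinic (n : nat) (g1 g2 : leibniz K) :=
  exists (q1 q2 : leibniz K) (pi1 : g1 -> q1) (pi2 : g2 -> q2)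
         (eta : q1 -> q2) (xi : g1 -> g2),
    quotient_map (ZLie g1 n) pi1 /\ quotient_map (ZLie g2 n) pi2 /\
    leib_iso eta /\ iso_on (gammaLie g1 n.+1) (gammaLie g2 n.+1) xi /\
    forall (x : nat -> g1) (y : nat -> g2),
      (forall i, (i <= n)%N -> eta (pi1 (x i)) = pi2 (y i)) ->
      xi (lieNest x n) = lieNest y n.

End Defs.
Arguments gammaLie {K} g i.
Arguments ZLie {K} g i.

(* Main.v *)
Require Import Defs.
From HB Require Import structures.
From mathcomp Require Import all_boot all_order all_algebra.
From Stdlib Require Import ClassicalEpsilon.
Set Implicit Arguments. Unset Strict Implicit. Unset Printing Implicit Defensive.
Import GRing.Theory.
Local Open Scope ring_scope.

Notation LN x k := (lieNest _ _ x k).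

Section Basic.
Variable K : fieldType.
Variable g : leibniz K.
Implicit Types x y z u v w : g.

Lemma brDl x y z : lbr (x + y) z = lbr x z + lbr y z.
Proof. by have := lbr_linl 1 x y z; rewrite !scale1r. Qed.
Lemma brDr x y z : lbr z (x + y) = lbr z x + lbr z y.
Proof. by have := lbr_linr 1 x y z; rewrite !scale1r. Qed.
Lemma br0l z : lbr 0 z = 0 :> g.
Proof. have h := brDl 0 0 z; rewrite addr0 in h; by apply: (addrI (lbr 0 z)); rewrite addr0 -h. Qed.
Lemma br0r z : lbr z 0 = 0 :> g.
Proof. have h := brDr 0 0 z; rewrite addr0 in h; by apply: (addrI (lbr z 0)); rewrite addr0 -h. Qed.
Lemma brZl a x z : lbr (a *: x) z = a *: lbr x z.
Proof. by have := lbr_linl a x 0 z; rewrite addr0 br0l addr0. Qed.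
Lemma brZr a x z : lbr z (a *: x) = a *: lbr z x.
Proof. by have := lbr_linr a x 0 z; rewrite addr0 br0r addr0. Qed.
Lemma brNl x z : lbr (- x) z = - lbr x z.
Proof. by rewrite -scaleN1r brZl scaleN1r. Qed.
Lemma brNr x z : lbr z (- x) = - lbr z x.
Proof. by rewrite -scaleN1r brZr scaleN1r. Qed.
Lemma brBl x y z : lbr (x - y) z = lbr x z - lbr y z.
Proof. by rewrite brDl brNl. Qed.
Lemma brBr x y z : lbr z (x - y) = lbr z x - lbr z y.
Proof. by rewrite brDr brNr. Qed.

Lemma lieC x y : lie x y = lie y x.
Proof. by rewrite /lie addrC. Qed.
Lemma lieDl x y z : lie (x + y) z = lie x z + lie y z.
Proof. rewrite /lie brDl brDr; by rewrite addrACA. Qed.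
Lemma lieZl a x z : lie (a *: x) z = a *: lie x z.
Proof. by rewrite /lie brZl brZr scalerDr. Qed.
Lemma lie0l z : lie 0 z = 0 :> g.
Proof. by rewrite /lie br0l br0r addr0. Qed.
Lemma lieNl x z : lie (- x) z = - lie x z.
Proof. by rewrite -scaleN1r lieZl scaleN1r. Qed.
Lemma lieBl x y z : lie (x - y) z = lie x z - lie y z.
Proof. by rewrite lieDl lieNl. Qed.

Lemma ac4 (V : zmodType) (a b c d : V) : (a + b) + (c + d) = (b + c) + (a + d).
Proof. by rewrite addrACA [a + c]addrC -addrACA [c + b]addrC. Qed.

Lemma lie_der u v c : lbr (lie u v) c = lie (lbr u c) v + lie u (lbr v c).
Proof.
rewrite /lie brDl.
have E1 := lbr_leibniz u v c. have E2 := lbr_leibniz v u c.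
have F1 : lbr (lbr u v) c = lbr u (lbr v c) + lbr (lbr u c) v.
  by rewrite E1 subrK.
have F2 : lbr (lbr v u) c = lbr v (lbr u c) + lbr (lbr v c) u.
  by rewrite E2 subrK.
rewrite F1 F2; exact: ac4.
Qed.

Definition Rann : g -> Prop := fun z => forall y, lbr y z = 0.

Lemma Rann_lie a b : Rann (lie a b).
Proof.
move=> y; rewrite /lie brDr !lbr_leibniz.
by rewrite addrA subrK subrr.
Qed.

Lemma Rann_ideal : ideal Rann.
Proof.
split; first split.
- by move=> y; rewrite br0r.
- by move=> a x y hx hy w; rewrite brDr brZr hx hy scaler0 addr0.
move=> x y hx; split.
- by move=> w; rewrite lbr_leibniz !hx br0l subrr.
- by rewrite hx => w; rewrite br0r.
Qed.

Lemma ideal0 (I : g -> Prop) : ideal I -> I 0.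
Proof. by case=> [[]]. Qed.
Lemma idealD (I : g -> Prop) x y : ideal I -> I x -> I y -> I (x + y).
Proof. by case=> [[_ h]] _ hx hy; have := h 1 x y hx hy; rewrite scale1r. Qed.
Lemma idealZ (I : g -> Prop) a x : ideal I -> I x -> I (a *: x).
Proof. by move=> hI hx; case: (hI) => [[h0 h]] _; have := h a x 0 hx h0; rewrite addr0. Qed.
Lemma idealN (I : g -> Prop) x : ideal I -> I x -> I (- x).
Proof. by move=> hI hx; rewrite -scaleN1r; apply: idealZ. Qed.
Lemma idealB (I : g -> Prop) x y : ideal I -> I x -> I y -> I (x - y).
Proof. by move=> hI hx hy; apply: idealD => //; apply: idealN. Qed.
Lemma idealL (I : g -> Prop) x y : ideal I -> I x -> I (lbr x y).
Proof. by case=> _ h hx; case: (h x y hx). Qed.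
Lemma idealR (I : g -> Prop) x y : ideal I -> I x -> I (lbr y x).
Proof. by case=> _ h hx; case: (h x y hx). Qed.
Lemma ideal_lie (I : g -> Prop) x y : ideal I -> I x -> I (lie x y).
Proof. by move=> hI hx; apply: idealD => //; [apply: idealL | apply: idealR]. Qed.

Lemma gen_ideal_ideal (T : g -> Prop) : ideal (gen_ideal T).
Proof.
split; first split.
- by move=> I hI _; apply: ideal0.
- move=> a x y hx hy I hI hT; case: (hI) => [[_ h]] _; apply: h.
    exact: hx. exact: hy.
move=> x y hx; split => I hI hT.
- by apply: idealL => //; apply: hx.
- by apply: idealR => //; apply: hx.
Qed.
Lemma gen_ideal_sub (T : g -> Prop) t : T t -> gen_ideal T t.
Proof. by move=> ht I _ h; apply: h. Qed.
Lemma gen_ideal_min (T I : g -> Prop) : ideal I -> (forall t, T t -> I t) ->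
  forall x, gen_ideal T x -> I x.
Proof. by move=> hI hT x hx; apply: hx. Qed.

Lemma True_ideal : ideal (fun _ : g => True).
Proof. by split; first split. Qed.

Lemma gammaSS k : gammaLie g k.+2 = lie_comm (gammaLie g k.+1) (fun _ => True).
Proof. by []. Qed.

Lemma gamma_ideal k : ideal (gammaLie g k).
Proof.
case: k => [|[|k]]; try exact: True_ideal.
rewrite gammaSS; exact: gen_ideal_ideal.
Qed.

Lemma gamma_gen k m y : gammaLie g k.+1 m -> gammaLie g k.+2 (lie m y).
Proof. by move=> hm; rewrite gammaSS; apply: gen_ideal_sub; exists m, y. Qed.

Lemma gamma_decr k x : gammaLie g k.+1 x -> gammaLie g k x.
Proof.
case: k x => [|k] x; first by [].
rewrite gammaSS => hx; apply: (gen_ideal_min (gamma_ideal k.+1)) hx.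
by move=> t [m [y [hm [_ ->]]]]; apply: ideal_lie => //; exact: gamma_ideal.
Qed.

Lemma gamma_sub2 k x : gammaLie g k.+2 x -> gammaLie g 2 x.
Proof. elim: k x => [//|k IH] x hx; apply: IH; exact: gamma_decr. Qed.

Lemma gamma2_Rann x : gammaLie g 2 x -> Rann x.
Proof.
move=> hx; apply: (gen_ideal_min Rann_ideal) hx.
by move=> t [m [y [_ [_ ->]]]]; apply: Rann_lie.
Qed.

Lemma ZLie0 k : ZLie g k 0.
Proof. by elim: k => [//|k IH] /= y; rewrite lie0l. Qed.

Lemma lieNest_ext (x x' : nat -> g) k :
  (forall i, (i <= k)%N -> x i = x' i) -> LN x k = LN x' k.
Proof.
elim: k => [|k IH] h /=; first by apply: h.
rewrite IH ?h // => i hi; apply: h; exact: leqW.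
Qed.

Lemma lieNest_gamma (x : nat -> g) k : gammaLie g k.+1 (LN x k).
Proof. by elim: k => [//|k IH] /=; apply: gamma_gen. Qed.
End Basic.
Section Frat.
Variable K : fieldType.
Variable g : leibniz K.

Lemma sub_ideal_props (M : g -> Prop) : subalgebra M ->
  M 0 /\ (forall a x y, M x -> M y -> M (a *: x + y)) /\ (forall x y, M x -> M y -> M (lbr x y)).
Proof. by case=> [[h0 h] hb]. Qed.

Lemma Z1_gamma2_Frattini (x : g) : (forall y, lie x y = 0) -> gammaLie g 2 x -> Frattini x.
Proof.
move=> hZ hx2 M [hM [_ hmax]].
have hR := gamma2_Rann hx2.
have hL : forall y, lbr x y = 0.
  by move=> y; have := hZ y; rewrite /lie hR addr0.
have [h0 [hS hB]] := sub_ideal_props hM.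
have eL : forall m a z, lbr (m + a *: x) z = lbr m z.
  by move=> m a z; rewrite brDl brZl hL scaler0 addr0.
have eR : forall m a z, lbr z (m + a *: x) = lbr z m.
  by move=> m a z; rewrite brDr brZr hR scaler0 addr0.
apply: NNPP => hMx.
pose N := fun y => exists m a, M m /\ y = m + a *: x.
have hN : subalgebra N.
  split; first split.
  - by exists 0, 0; rewrite scale0r addr0.
  - move=> a y z [m1 [b1 [h1 ->]]] [m2 [b2 [h2 ->]]].
    exists (a *: m1 + m2), (a * b1 + b2); split; first by apply: hS.
    by rewrite scalerDr scalerDl scalerA addrACA.
  - move=> y z [m1 [b1 [h1 ->]]] [m2 [b2 [h2 ->]]].
    exists (lbr m1 m2), 0; split; first by apply: hB.
    by rewrite eL eR scale0r addr0.
case: (hmax N hN).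
- by move=> m hm; exists m, 0; rewrite scale0r addr0.
- move=> e; apply: hMx; apply/e; exists 0, 1; by rewrite scale1r add0r.
move=> hall.
have hMi : ideal M.
  split; first by split.
  move=> m y hm; have [m' [a [hm' ->]]] := hall y.
  by rewrite eL eR; split; apply: hB.
have hG : forall z, gammaLie g 2 z -> M z.
  move=> z hz; apply: (gen_ideal_min hMi) hz.
  move=> t [a [b [_ [_ ->]]]].
  have [m1 [c1 [h1 ->]]] := hall a. have [m2 [c2 [h2 ->]]] := hall b.
  rewrite /lie eL eR eL eR.
  have := hS 1 _ _ (hB _ _ h1 h2) (hB _ _ h2 h1); by rewrite scale1r.
by apply: hMx; apply: hG.
Qed.
End Frat.

Section Key.
Variable K : fieldType.
Variable g : leibniz K.
Hypothesis hZ1 : forall x : g, (forall y, lie x y = 0) -> gammaLie g 2 x -> x = 0.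

Lemma Zn_Z1 k (x : g) : ZLie g k.+1 x <-> (forall y, lie x y = 0).
Proof.
elim: k x => [//|k IH] x /=; split.
- move=> h y; apply: hZ1; last exact: (gamma_gen (k:=0)).
  by move=> w; apply: ((IH (lie x y)).1 (h y)).
- by move=> h y; apply/IH => w; rewrite h lie0l.
Qed.

Lemma KLn n (x : g) : ZLie g n x -> gammaLie g n.+1 x -> x = 0.
Proof.
case: n => [//|k] hz hg; apply: hZ1; first exact: ((Zn_Z1 k x).1 hz).
exact: (gamma_sub2 hg).
Qed.
End Key.

Section Hom.
Variable K : fieldType.
Variables g h : leibniz K.
Variable f : g -> h.
Hypothesis hf : leib_hom f.

Lemma homD x y : f (x + y) = f x + f y.
Proof. by case: hf => hl _; have := hl 1 x y; rewrite !scale1r. Qed.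
Lemma hom0 : f 0 = 0.
Proof. have e := homD 0 0; rewrite addr0 in e; by apply: (addrI (f 0)); rewrite addr0 -e. Qed.
Lemma homZ a x : f (a *: x) = a *: f x.
Proof. by case: hf => hl _; have := hl a x 0; rewrite !addr0 hom0 addr0. Qed.
Lemma homN x : f (- x) = - f x.
Proof. by rewrite -scaleN1r homZ scaleN1r. Qed.
Lemma homB x y : f (x - y) = f x - f y.
Proof. by rewrite homD homN. Qed.
Lemma homL x y : f (lbr x y) = lbr (f x) (f y).
Proof. by case: hf. Qed.
Lemma hom_lie x y : f (lie x y) = lie (f x) (f y).
Proof. by rewrite /lie homD !homL. Qed.
Lemma hom_lieNest (y : nat -> g) (x : nat -> h) k :
  (forall i, (i <= k)%N -> f (y i) = x i) -> f (LN y k) = LN x k.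
Proof.
elim: k => [|k IH] hi /=; first by apply: hi.
rewrite hom_lie IH ?hi // => i li; apply: hi; exact: leqW.
Qed.

Lemma gamma_fwd k w : gammaLie g k w -> gammaLie h k (f w).
Proof.
elim: k w => [//|[//|k] IH] w; rewrite gammaSS => hw.
pose P := fun z => gammaLie h k.+2 (f z).
have hP : ideal P.
  have hI := gamma_ideal h k.+2.
  split; first split.
  - by rewrite /P hom0; exact: (ideal0 hI).
  - by move=> a x y hx hy; rewrite /P homD homZ; apply: (idealD hI) => //; apply: (idealZ _ hI).
  - by move=> x y hx; rewrite /P !homL; split; [apply: (idealL _ hI) | apply: (idealR _ hI)].
apply: (gen_ideal_min hP) hw => t [m [y [hm [_ ->]]]].
by rewrite /P hom_lie; apply: gamma_gen; apply: IH.
Qed.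

Hypothesis fsurj : forall z : h, exists x, f x = z.

Lemma gamma_bwd k z : gammaLie h k z -> exists w, gammaLie g k w /\ f w = z.
Proof.
elim: k z => [|[|k] IH] z.
- by move=> _; have [x hx] := fsurj z; exists x.
- by move=> _; have [x hx] := fsurj z; exists x.
rewrite gammaSS => hz.
pose P := fun z => exists w, gammaLie g k.+2 w /\ f w = z.
have hI := gamma_ideal g k.+2.
have hP : ideal P.
  split; first split.
  - by exists 0; split; [exact: (ideal0 hI) | apply: hom0].
  - move=> a x y [wx [hx <-]] [wy [hy <-]]; exists (a *: wx + wy); split.
      by apply: (idealD hI) => //; apply: (idealZ _ hI).
    by rewrite homD homZ.
  - move=> x y [wx [hx <-]]; have [wy <-] := fsurj y; split.
      by exists (lbr wx wy); split; [apply: (idealL _ hI) | rewrite homL].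
    by exists (lbr wy wx); split; [apply: (idealR _ hI) | rewrite homL].
apply: (gen_ideal_min hP) hz => t [m [y [hm [_ ->]]]].
have [wm [hwm <-]] := IH m hm; have [wy <-] := fsurj y.
by exists (lie wm wy); split; [apply: gamma_gen | rewrite hom_lie].
Qed.
End Hom.

Section Rel.
Variable K : fieldType.
Variables (h g q1 q2 : leibniz K) (pi1 : h -> q1) (pi2 : g -> q2) (eta : q1 -> q2).
Hypotheses (hpi1 : leib_hom pi1) (hpi2 : leib_hom pi2) (heta : leib_hom eta).

Definition rel (c : h) (d : g) := eta (pi1 c) = pi2 d.

Inductive T (k : nat) : h -> g -> Prop :=
| Tnest (x : nat -> h) (y : nat -> g) :
    (forall i, (i <= k)%N -> rel (x i) (y i)) -> T k (LN x k) (LN y k)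
| Tzero : T k 0 0
| Tcomb a u v u' v' : T k u v -> T k u' v' -> T k (a *: u + u') (a *: v + v').

Lemma Tadd k u v u' v' : T k u v -> T k u' v' -> T k (u + u') (v + v').
Proof. by move=> h1 h2; have := Tcomb 1 h1 h2; rewrite !scale1r. Qed.

Lemma rel_br c d c' d' : rel c d -> rel c' d' -> rel (lbr c c') (lbr d d').
Proof. by rewrite /rel => e e'; rewrite (homL hpi1) (homL heta) (homL hpi2) e e'. Qed.

Lemma T_lie k u v c d : T k u v -> rel c d -> T k.+1 (lie u c) (lie v d).
Proof.
move=> hT hr; elim: hT => [x y hxy | | a u1 v1 u2 v2 _ IH1 _ IH2].
- pose x' := fun i => if i == k.+1 then c else x i.
  pose y' := fun i => if i == k.+1 then d else y i.
  have -> : lie (LN x k) c = LN x' k.+1.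
    rewrite /= /x' eqxx; congr lie; apply: lieNest_ext => i hi.
    by rewrite ifN // neq_ltn ltnS hi.
  have -> : lie (LN y k) d = LN y' k.+1.
    rewrite /= /y' eqxx; congr lie; apply: lieNest_ext => i hi.
    by rewrite ifN // neq_ltn ltnS hi.
  apply: Tnest => i hi; rewrite /x' /y'; case: eqP => // ne.
  by apply: hxy; rewrite -ltnS ltn_neqAle hi andbT; apply/eqP.
- by rewrite !lie0l; apply: Tzero.
- by rewrite !lieDl !lieZl; apply: Tcomb.
Qed.

Lemma T_br k u v c d : T k u v -> rel c d -> T k (lbr u c) (lbr v d).
Proof.
elim: k u v c d => [|k IHk] u v c d hT hr.
- elim: hT => [x y hxy | | a u1 v1 u2 v2 _ IH1 _ IH2].
  + have := @Tnest 0%N (fun _ => lbr (x 0%N) c) (fun _ => lbr (y 0%N) d).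
    by apply => i _; apply: rel_br => //; apply: hxy.
  + by rewrite !br0l; apply: Tzero.
  + by rewrite !brDl !brZl; apply: Tcomb.
- elim: hT => [x y hxy | | a u1 v1 u2 v2 _ IH1 _ IH2].
  + rewrite /= !lie_der.
    apply: Tadd; apply: T_lie.
    * apply: IHk => //; apply: Tnest => i hi; apply: hxy; exact: leqW.
    * exact: hxy.
    * by apply: Tnest => i hi; apply: hxy; exact: leqW.
    * by apply: rel_br => //; apply: hxy.
  + by rewrite !br0l; apply: Tzero.
  + by rewrite !brDl !brZl; apply: Tcomb.
Qed.

Lemma T_gamma k u v : T k u v -> gammaLie h k.+1 u.
Proof.
elim => [x y _ | | a u1 v1 u2 v2 _ IH1 _ IH2].
- exact: lieNest_gamma.
- exact: (ideal0 (gamma_ideal h k.+1)).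
- by apply: (idealD (gamma_ideal h k.+1)) => //; apply: (idealZ _ (gamma_ideal h k.+1)).
Qed.

Hypothesis relS : forall c : h, exists d, rel c d.

Lemma T_exists k u : gammaLie h k.+1 u -> exists v, T k u v.
Proof.
elim: k u => [|k IH] u hu.
- have [d hd] := relS u.
  exists (LN (fun _ => d) 0); have := @Tnest 0%N (fun _ => u) (fun _ => d).
  by apply => i _.
pose P := fun u => exists v, T k.+1 u v.
have hP : ideal P.
  split; first split.
  - by exists 0; apply: Tzero.
  - by move=> a x y [v1 h1] [v2 h2]; exists (a *: v1 + v2); apply: Tcomb.
  - move=> x y [v hv]; have [d hd] := relS y; split.
      by exists (lbr v d); apply: T_br.
    have -> : lbr y x = 0.
      by apply: (gamma2_Rann (gamma_sub2 (T_gamma hv))).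
    by exists 0; apply: Tzero.
rewrite gammaSS in hu; apply: (gen_ideal_min hP) hu => t [m [y [hm [_ ->]]]].
have [v hv] := IH m hm; have [d hd] := relS y.
by exists (lie v d); apply: T_lie.
Qed.
End Rel.

Section Quot.
Variable K : fieldType.

Lemma qm_hom (g q : leibniz K) (I : g -> Prop) (p : g -> q) : quotient_map I p -> leib_hom p.
Proof. by case. Qed.
Lemma qm_surj (g q : leibniz K) (I : g -> Prop) (p : g -> q) : quotient_map I p -> forall y, exists x, p x = y.
Proof. by case=> _ []. Qed.
Lemma qm_eq (g q : leibniz K) (I : g -> Prop) (p : g -> q) : quotient_map I p ->
  forall w w', p w = p w' <-> I (w - w').
Proof.
move=> hp w w'; have hh := qm_hom hp; case: hp => _ [_ hk].
rewrite -hk (homB hh); split; first by move=> ->; rewrite subrr.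
by move/eqP; rewrite subr_eq0 => /eqP.
Qed.
Lemma qm_ker (g q : leibniz K) (I : g -> Prop) (p : g -> q) : quotient_map I p ->
  forall w, p w = 0 <-> I w.
Proof. by case=> _ []. Qed.

Lemma iso_inj (g h : leibniz K) (f : g -> h) : leib_iso f -> injective f.
Proof. by case=> _ /bij_inj. Qed.
Lemma iso_surj (g h : leibniz K) (f : g -> h) : leib_iso f -> forall y, exists x, f x = y.
Proof. by case=> _ [f' _ c]; move=> y; exists (f' y); rewrite c. Qed.
Lemma iso_hom (g h : leibniz K) (f : g -> h) : leib_iso f -> leib_hom f.
Proof. by case. Qed.

Lemma mk_iso (g h : leibniz K) (f : g -> h) : leib_hom f ->
  (forall x, f x = 0 -> x = 0) -> (forall y, exists x, f x = y) -> leib_iso f.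
Proof.
move=> hf hk hs; split => //.
have inj : injective f.
  move=> x x' e; apply/eqP; rewrite -subr_eq0; apply/eqP; apply: hk.
  by rewrite (homB hf) e subrr.
pose f' := fun y => epsilon (inhabits 0) (fun x => f x = y).
have hf' : forall y, f (f' y) = y by move=> y; apply: (epsilon_spec (inhabits 0) (fun x => f x = y)).
exists f'; first by move=> x; apply: inj; rewrite hf'.
exact: hf'.
Qed.
End Quot.

Lemma uniq_part (K : fieldType) (g q : leibniz K) (pi : g -> q) n
  (hq : quotient_map (ZLie g n) pi)
  (hKL : forall x, ZLie g n x -> gammaLie g n.+1 x -> x = 0)
  (h : leibniz K) : Lie_stem n h -> Lie_isoclinic n h g -> leib_isomorphic h q.
Proof.
move=> hst [q1 [q2 [pi1 [pi2 [eta [xi [hq1 [hq2 [heta [hxi hcomp]]]]]]]]]].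
have hp1 := qm_hom hq1; have hp2 := qm_hom hq2; have he := iso_hom heta.
have hpi := qm_hom hq.
have [xlin [xbr [xB [xinj xsurj]]]] := hxi.
have hA0 : gammaLie h n.+1 0 := ideal0 (gamma_ideal h n.+1).
have xi0 : xi 0 = 0.
  have := xlin 1 0 0 hA0 hA0; rewrite !scale1r addr0 => e.
  by apply: (addrI (xi 0)); rewrite addr0 -e.
have hZh : forall x, ZLie h n x -> x = 0.
  case: n hq hKL hst hq1 hq2 hcomp hxi xlin xbr xB xinj xsurj hA0 xi0
    => [|k] hq hKL hst hq1 hq2 hcomp hxi xlin xbr xB xinj xsurj hA0 xi0 x hx //.
  have relS : forall c, exists d, rel pi1 pi2 eta c d.
    by move=> c; have [d hd] := qm_surj hq2 (eta (pi1 c)); exists d.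
  have relS' : forall d, exists c, rel pi1 pi2 eta c d.
    move=> d; have [z hz] := iso_surj heta (pi2 d).
    by have [c hc] := qm_surj hq1 z; exists c; rewrite /rel hc.
  have T_xi : forall u v, T pi1 pi2 eta k.+1 u v -> xi u = v.
    move=> u v; elim => [x0 y0 hxy | | a u1 v1 u2 v2 h1 IH1 h2 IH2].
    - by apply: hcomp.
    - exact: xi0.
    - by rewrite xlin ?IH1 ?IH2 //; apply: T_gamma; eassumption.
  have inter : forall u c d, gammaLie h k.+2 u -> rel pi1 pi2 eta c d ->
      xi (lie u c) = lie (xi u) d.
    move=> u c d hu hr.
    have [v hv] := T_exists hp1 hp2 he relS hu.
    have ev := T_xi _ _ hv.
    have hbr := T_xi _ _ (T_br hp1 hp2 he hv hr).
    have hRu := gamma2_Rann (gamma_sub2 hu).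
    have hRv := gamma2_Rann (gamma_sub2 (xB _ hu)).
    by rewrite /lie hRu hRv !addr0 hbr ev.
  have transfer : forall j x, ZLie h j x -> gammaLie h k.+2 x -> ZLie g j (xi x).
    elim=> [|j IH] y hy hyg /=; first by rewrite hy xi0.
    move=> d; have [c hc] := relS' d.
    rewrite -(inter _ _ _ hyg hc); apply: IH; first exact: hy.
    exact: (ideal_lie _ (gamma_ideal h k.+2)).
  have hg := hst x hx.
  have := hKL _ (transfer _ _ hx hg) (xB _ hg); rewrite -xi0 => e.
  exact: xinj.
pose s := fun z => epsilon (inhabits (0 : g)) (fun w => pi2 w = z).
have hs : forall z, pi2 (s z) = z.
  by move=> z; apply: (epsilon_spec (inhabits (0:g)) (fun w => pi2 w = z)); exact: (qm_surj hq2 z).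
have key : forall w w', pi2 w = pi2 w' -> pi w = pi w'.
  by move=> w w' e; apply/(qm_eq hq); apply/(qm_eq hq2).
pose f := fun x => pi (s (eta (pi1 x))).
exists f; apply: mk_iso.
- split.
  + move=> a x y; rewrite /f -(homZ hpi) -(homD hpi); apply: key.
    by rewrite hs (homD hp2) (homZ hp2) !hs (homD hp1) (homZ hp1) (homD he) (homZ he).
  + move=> x y; rewrite /f -(homL hpi); apply: key.
    by rewrite hs (homL hp2) !hs (homL hp1) (homL he).
- move=> x; rewrite /f => /(qm_ker hq) /(qm_ker hq2); rewrite hs => e.
  apply: hZh; apply/(qm_ker hq1); apply: (iso_inj heta); by rewrite e (hom0 he).
- move=> y; have [w <-] := qm_surj hq y.
  have [z hz] := iso_surj heta (pi2 w); have [x hx] := qm_surj hq1 z.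
  by exists x; rewrite /f; apply: key; rewrite hs hx hz.
Qed.

Theorem mainTheorem16 (K : fieldType) (hK : (2%:R : K) != 0) (n : nat)
  (g : leibniz K) (hPhi : forall x : g, Frattini x -> x = 0)
  (q : leibniz K) (pi : g -> q) (hq : quotient_map (ZLie g n) pi) :
  (Lie_stem n q /\ Lie_isoclinic n q g) /\
  (forall h : leibniz K, Lie_stem n h -> Lie_isoclinic n h g ->
     leib_isomorphic h q).
Proof.
have hZ1 : forall x : g, (forall y, lie x y = 0) -> gammaLie g 2 x -> x = 0.
  by move=> x hx hg; apply: hPhi; apply: Z1_gamma2_Frattini.
have hKL : forall x, ZLie g n x -> gammaLie g n.+1 x -> x = 0 := fun x => @KLn _ _ hZ1 n x.
split; last by move=> h; exact: (uniq_part hq hKL).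
have hpi := qm_hom hq.
have Zq0 : forall x, ZLie q n x -> x = 0.
  case: n hq hKL hpi => [|k] hq hKL hpi x hx //.
  have hZ1q' : forall x : q, (forall y, lie x y = 0) -> x = 0.
    move=> z hz; have [w ew] := qm_surj hq z; subst z.
    apply/(qm_ker hq); apply/(Zn_Z1 hZ1) => v.
    apply: (hZ1); last exact: (gamma_gen (k:=0)).
    apply: ((Zn_Z1 hZ1 k (lie w v)).1).
    by apply/(qm_ker hq); rewrite (hom_lie hpi) hz.
  have hZ1q : forall x : q, (forall y, lie x y = 0) -> gammaLie q 2 x -> x = 0.
    by move=> z hz _; apply: hZ1q'.
  by apply: hZ1q'; exact: ((Zn_Z1 hZ1q k x).1 hx).
split.
  by move=> x /Zq0 ->; exact: (ideal0 (gamma_ideal q n.+1)).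
have inj : forall u v, gammaLie g n.+1 u -> gammaLie g n.+1 v -> pi u = pi v -> u = v.
  move=> u v hu hv /(qm_eq hq) e; apply/eqP; rewrite -subr_eq0; apply/eqP.
  by apply: hKL => //; apply: (idealB (gamma_ideal g n.+1)).
pose xi := fun z => epsilon (inhabits (0 : g)) (fun w => gammaLie g n.+1 w /\ pi w = z).
have xi_spec : forall z, gammaLie q n.+1 z -> gammaLie g n.+1 (xi z) /\ pi (xi z) = z.
  move=> z hz; apply: (epsilon_spec (inhabits (0:g)) (fun w => gammaLie g n.+1 w /\ pi w = z)).
  exact: (gamma_bwd hpi (qm_surj hq) hz).
have xi_pi : forall w, gammaLie g n.+1 w -> xi (pi w) = w.
  move=> w hw; have [h1 h2] := xi_spec (pi w) (gamma_fwd hpi hw).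
  exact: inj.
have hidq : quotient_map (ZLie q n) (fun x : q => x).
  split; first by split.
  split; first by move=> y; exists y.
  by move=> x; split; [move=> ->; exact: ZLie0 | exact: Zq0].
exists q, q, (fun x => x), pi, (fun x => x), xi.
split; first exact: hidq.
split; first exact: hq.
split.
  split; first by split.
  by exists (fun x => x).
have hGg := gamma_ideal g n.+1.
split.
  split.
    move=> a x y hx hy; have [h1 e1] := xi_spec x hx; have [h2 e2] := xi_spec y hy.
    rewrite -{1}e1 -{1}e2 -(homZ hpi) -(homD hpi) xi_pi //.
    by apply: (idealD hGg) => //; apply: (idealZ _ hGg).
  split.
    move=> x y hx hy; have [h1 e1] := xi_spec x hx; have [h2 e2] := xi_spec y hy.
    rewrite -{1}e1 -{1}e2 -(homL hpi) xi_pi //.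
    exact: (idealL _ hGg).
  split; first by move=> x hx; case: (xi_spec x hx).
  split.
    move=> x y hx hy e; have [_ e1] := xi_spec x hx; have [_ e2] := xi_spec y hy.
    by rewrite -e1 -e2 e.
  move=> z hz; exists (pi z); split; first exact: (gamma_fwd hpi hz).
  exact: xi_pi.
move=> x y hxy.
rewrite -(hom_lieNest hpi (x := x) (y := y)); first exact: xi_pi (lieNest_gamma _ _).
by move=> i hi; rewrite hxy.
Qed.
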